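(* Let $f\in C^\infty(\mathbb{R})$ be real-valued, let $a\in\mathbb{R}$ and $g=(aI+\frac{d}{dx})f$, i.e. $g=af+f'$. Then $D^-(N_g,m_g)\ge D^-(N_f,m_f)$. Moreover, for $N\ge2$ and real-valued $f\in C^{N-1}(\mathbb{R})$, the same inequality holds when $m_f$ is replaced by the multiplicity function of the zeros of $f$ of height at most $N$ and $m_g$ by the multiplicity function of the zeros of $g$ of height at most $N-1$.
   Context: For a function $h$, $N_h$ is its set of real zeros and $m_h(x)=\sup\{m:h^{(j)}(x)=0\text{ for }0\le j<m\}$ its multiplicity function. For $h\in C^{K-1}(\mathbb{R})$, the multiplicity function of zeros of height at most $K$ is $x\mapsto\max\{m\le K:h^{(j)}(x)=0\text{ for }0\le j<m\}$. $D^-(N,m)=\liminf_{r\to\infty}\inf_{x\in\mathbb{R}}\frac{1}{2r}\sum_{\lambda\in N\cap[x-r,x+r]}m(\lambda)$. *)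

(* Defs.v *)
From HB Require Import structures.
From mathcomp Require Import all_boot all_order all_algebra.
From mathcomp Require Import all_classical all_reals all_analysis.
Set Implicit Arguments. Unset Strict Implicit. Unset Printing Implicit Defensive.
Import Order.TTheory GRing.Theory Num.Theory.
Import numFieldNormedType.Exports.
Local Open Scope classical_set_scope.
Local Open Scope ring_scope.

Section Defs.
Variable R : realType.

Definition smooth (f : R -> R) : Prop :=
  forall (n : nat) (x : R), derivable (derive1n n f) x 1.

Definition Ck (k : nat) (f : R -> R) : Prop :=
  (forall (j : nat) (x : R), (j < k)%N -> derivable (derive1n j f) x 1) /\
  continuous (derive1n k f).

Definition zeros (h : R -> R) : set R := [set x | h x = 0].

Definition mult (h : R -> R) (x : R) : \bar R :=
  ereal_sup [set (m%:R)%:E | m in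
     [set m : nat | forall j : nat, (j < m)%N -> derive1n j h x = 0]].

Definition mult_le (K : nat) (h : R -> R) (x : R) : \bar R :=
  ereal_sup [set (m%:R)%:E | m in
     [set m : nat | (m <= K)%N /\ forall j : nat, (j < m)%N -> derive1n j h x = 0]].

Definition window_count (N : set R) (m : R -> \bar R) (r x : R) : \bar R :=
  ((2 * r)^-1)%:E * (esum (N `&` [set y : R | (x - r <= y <= x + r)%R]) m).

(* D^-(N,m) = liminf_{r -> oo} inf_x (1/2r) sum ... ,
   with liminf_{r->oo} phi(r) = sup_{r0} inf_{r >= r0} phi(r). *)
Definition lower_density (N : set R) (m : R -> \bar R) : \bar R :=
  ereal_sup [set ereal_inf [set ereal_inf [set window_count N m r x | x in setT]
                           | r in [set r : R | r0 <= r]]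
            | r0 in [set r0 : R | 0 < r0]].

End Defs.

(* Main.v *)
Require Import Defs.
From HB Require Import structures.
From mathcomp Require Import all_boot all_order all_algebra.
From mathcomp Require Import all_classical all_reals all_analysis.
Import Order.TTheory GRing.Theory Num.Theory.
Import numFieldNormedType.Exports.
Local Open Scope classical_set_scope.
Local Open Scope ring_scope.

Section Core.
Variable R : realType.
Variables (Zf : set R) (mf mg : R -> \bar R) (d : R).
Hypothesis mg0 : forall x, (0 <= mg x)%E.
Hypothesis mfg : forall x, Zf x -> (mf x <= mg x + 1)%E.
Hypothesis rolle : forall u v, Zf u -> Zf v -> u < v ->
  exists2 t, u < t < v & (1 <= mg t)%E.

Lemma core_list (s : seq R) : sorted <%R s -> all (fun x => `[< Zf x >] && (x <= d)) s ->
  forall x0, s <> [::] -> exists T : seq R, [/\ uniq T,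
     (forall y, y \in T -> head x0 s <= y <= d) &
     (\sum_(x <- s) mf x <= \sum_(y <- T) mg y + 1)%E].
Proof.
elim: s => [//|x s IH] /= Hs /andP[/andP[/asboolP Zx xd] Hall] x0 _.
case: s IH Hs Hall => [|y s] IH Hs Hall.
  exists [:: x]; split => //.
    by move=> z; rewrite inE => /eqP ->; rewrite lexx xd.
  by rewrite !big_cons !big_nil !adde0; apply: mfg.
move: Hs => /andP[xy Hs].
have [T [uT HT HS]] := IH Hs Hall x0 (fun H : y :: s = [::] => ltac:(discriminate H)).
have /andP[/andP[/asboolP Zy yd] _] := Hall.
have [t /andP[xt ty] mgt] := rolle _ _ Zx Zy xy.
exists [:: t, x & T]; split.
- rewrite /= uT andbT inE negb_or gt_eqF //=; apply/andP; split.
  + by apply/negP => /HT /= /andP[] /(lt_le_trans ty); rewrite ltxx.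
  + by apply/negP => /HT /= /andP[] /(lt_le_trans xy); rewrite ltxx.
- move=> z; rewrite !inE => /orP[/eqP->|/orP[/eqP->|/HT/andP[yz zd]]].
  + rewrite (ltW xt) /=; apply: le_trans (ltW ty) _.
    exact: yd.
  + by rewrite lexx xd.
  + by rewrite zd (le_trans (ltW xy) yz).
- rewrite !big_cons.
  have := leeD (mfg _ Zx) HS. rewrite big_cons. move=> H; apply: (le_trans H).
  rewrite addeA (addeC (mg x)) -!addeA; apply: leeD => //.
Qed.

Lemma core_esum (Zg : set R) (c : R) : (forall x, ~ Zg x -> mg x = 0) ->
  (esum (Zf `&` [set y : R | (c <= y <= d)%R]) mf <= esum (Zg `&` [set y : R | (c <= y <= d)%R]) mg + 1)%E.
Proof.
move=> mgout.
have -> : esum (Zg `&` [set y : R | (c <= y <= d)%R]) mg = esum [set y : R | (c <= y <= d)%R] mg.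
  rewrite (esum_mkcondl Zg); apply: eq_esum.
  move=> i _; case: (boolP (i \in Zg)) => // /negP; rewrite in_setE => nZ.
  by rewrite mgout.
apply: ge_ereal_sup => _ [X [finX XI] <-].
rewrite fsbig_finite //=.
set s : seq R := finmap.enum_fset (fset_set X).
have ps : perm_eq (sort <=%R s) s by rewrite perm_sort.
rewrite -(perm_big _ ps).
have srt : sorted <%R (sort <=%R s) by rewrite sort_lt_sorted finmap.fset_uniq.
have inX : forall x, x \in sort <=%R s -> (Zf `&` [set y : R | (c <= y <= d)%R]) x.
  by move=> x; rewrite mem_sort in_fset_set // in_setE => /XI.
case E : (sort <=%R s) srt inX => [|h s'] srt inX.
  rewrite big_nil; apply: adde_ge0 => //; exact: esum_ge0.
have hall : all (fun x => `[< Zf x >] && (x <= d)) (h :: s').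
  apply/allP => x /inX [Zx /andP[_ xd]]; rewrite xd andbT; exact/asboolP.
have [T [uT HT HS]] := @core_list (h :: s') srt hall c (fun H : h :: s' = [::] => ltac:(discriminate H)).
apply: (le_trans HS); apply: leeD => //.
apply: esum_ge; exists [set` T].
  split; first exact: finite_seq.
  move=> y /= yT; have /andP[hy yd] := HT y yT.
  have [_ /andP[ch _]] := inX h (mem_head _ _).
  by rewrite (le_trans ch hy) yd.
by rewrite fsbig_seq.
Qed.
End Core.

Lemma density_mono (R : realType) (Zf Zg : set R) (mf mg : R -> \bar R) :
  (forall x, (0 <= mg x)%E) ->
  (forall r x : R, 0 < r ->
     (esum (Zf `&` [set y : R | (x - r <= y <= x + r)%R]) mf
      <= esum (Zg `&` [set y : R | (x - r <= y <= x + r)%R]) mg + 1)%E) ->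
  (lower_density Zf mf <= lower_density Zg mg)%E.
Proof.
move=> mg0 H.
rewrite /lower_density; apply: ge_ereal_sup => _ [r0 /= r00 <-].
apply/lee_addgt0Pr => e e0.
set r1 := Num.max r0 e^-1.
have r10 : 0 < r1 by rewrite lt_max r00.
apply: (@le_trans _ _ (ereal_inf [set ereal_inf [set window_count Zg mg r x | x in setT]
                           | r in [set r : R | (r1 <= r)%R]] + e%:E)%E); last first.
  apply: leeD => //; apply: ereal_sup_ubound; exists r1 => //.
rewrite -leeBlDr //; apply: le_ereal_inf_tmp => _ [r /= r1r <-].
apply: le_ereal_inf_tmp => _ [x _ <-].
rewrite EFinN leeBlDr //.
have r0r : r0 <= r by apply: le_trans r1r; rewrite le_max lexx.
have er : e^-1 <= r by apply: le_trans r1r; rewrite le_max lexx orbT.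
have r0' : 0 < r by apply: lt_le_trans r0r.
apply: (@le_trans _ _ (ereal_inf [set window_count Zf mf r x | x in setT])).
  by apply: ereal_inf_lbound; exists r.
apply: (@le_trans _ _ (window_count Zf mf r x)).
  by apply: ereal_inf_lbound; exists x.
rewrite /window_count.
have i0 : (0 <= ((2 * r)^-1)%:E)%E by rewrite lee_fin invr_ge0 mulr_ge0 // ltW.
apply: (le_trans (lee_pmul i0 _ (lexx _) (H r x r0'))).
  by apply: ereal_sup_ubound; exists set0; [exact: fsets_set0|rewrite fsbig_set0].
rewrite ge0_muleDr //; last exact: esum_ge0.
rewrite mule1; apply: leeD => //; rewrite lee_fin.
rewrite invf_ple ?posrE ?mulr_gt0 //.
apply: le_trans er _; rewrite mulr_natl mulr2n lerDr ltW //.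
Qed.

Lemma rolle_g (R : realType) (f : R -> R) (a u v : R) :
  (forall x, derivable f x 1) -> u < v -> f u = 0 -> f v = 0 ->
  exists2 t, u < t < v & a * f t + derive1 f t = 0.
Proof.
move=> df uv fu fv.
set e := expR \o (fun x => a * x).
set h := fun x => e x * f x.
have de : forall x : R, is_derive x 1 e (expR (a * x) * a).
  move=> x.
  have hl : is_derive x 1 (fun y : R => a * y) a.
    have H := is_deriveZ a (is_derive_id x (1:R)).
    rewrite -[X in is_derive _ _ _ X](mulr1 a). exact: H.
  exact: (is_derive1_comp (is_derive_expR (a * x)) hl).
have dh : forall x : R, is_derive x 1 h (e x *: 'D_1 f x + f x *: (expR (a * x) * a)).
  move=> x; have dfx : is_derive x 1 f ('D_1 f x) by apply/derivableP.
  exact: (is_deriveM (de x) dfx).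
have hcont : {within `[u, v], continuous h}.
  apply: derivable_within_continuous => x _; by case: (dh x).
have hd : forall x, x \in `]u, v[ -> derivable h x 1 by move=> x _; case: (dh x).
have huv : h u = h v by rewrite /h /= fu fv !mulr0.
have [c cI dc] := Rolle uv hd hcont huv.
have dc0 : 'D_1 h c = 0 by apply: derive_val.
have dc1 : 'D_1 h c = e c *: 'D_1 f c + f c *: (expR (a * c) * a) by have := dh c; case.
exists c; first by rewrite in_itv /= in cI.
move: dc0; rewrite dc1 derive1E /e /= => /eqP.
rewrite /GRing.scale /= mulrCA -mulrDr mulf_eq0 gt_eqF ?expR_gt0 //= addrC mulrC.
by move/eqP.
Qed.

Lemma derive1n_g (R : realType) (f : R -> R) (a : R) (K : nat) :
  (forall j (x : R), (j < K)%N -> derivable (derive1n j f) x 1) ->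
  forall j, (j < K)%N -> derive1n j (fun x => a * f x + derive1 f x) =
     (fun x => a * derive1n j f x + derive1n j.+1 f x).
Proof.
move=> Hd; elim=> [|j IH] jK; first by [].
rewrite derive1nS IH ?(ltnW jK) //; apply/funext => x.
rewrite [derive1n j.+2 f]derive1nS [derive1n j.+1 f]derive1nS !derive1E.
have dp : is_derive x 1 (derive1n j f) ('D_1 (derive1n j f) x).
  by apply/derivableP; apply: Hd; apply: ltnW.
have dq : is_derive x 1 (derive1n j.+1 f) ('D_1 (derive1n j.+1 f) x).
  by apply/derivableP; apply: Hd.
have := is_deriveD (is_deriveZ a dp) dq.
rewrite -derive1nS.
by case.
Qed.

Section MS.
Variable R : realType.
Local Open Scope ereal_scope.
Definition MS (A : set nat) : \bar R := ereal_sup [set (m%:R)%:E | m in A].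

Lemma MS_ge0 A : A 0%N -> 0 <= MS A.
Proof. by move=> A0; apply: ereal_sup_ubound; exists 0%N. Qed.

Lemma MS_ge1 A : A 1%N -> 1 <= MS A.
Proof. by move=> A1; apply: ereal_sup_ubound; exists 1%N. Qed.

Lemma MS_le0 A : (forall m, A m -> m = 0%N) -> MS A <= 0.
Proof. by move=> HA; apply: ge_ereal_sup => _ [m Am <-]; rewrite (HA m Am). Qed.

Lemma MS_shift A B : B 0%N -> (forall m, A m.+1 -> B m) -> MS A <= MS B + 1.
Proof.
move=> B0 HAB; apply: ge_ereal_sup => _ [[|m] Am <-].
  by apply: adde_ge0 => //; exact: MS_ge0.
have := ereal_sup_ubound (S := [set (m%:R)%:E | m in B]) (ltac:(exists m; [exact: HAB|reflexivity])).
move=> Hm; rewrite -natr1 EFinD; by apply: leeD => //; exact: Hm.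
Qed.
End MS.

Theorem lemma4p8 (R : realType) :
  (forall (f : R -> R) (a : R), smooth f ->
     let g := fun x => a * f x + derive1 f x in
     (lower_density (zeros f) (mult f) <= lower_density (zeros g) (mult g))%E)
  /\
  (forall (N : nat), (2 <= N)%N ->
   forall (f : R -> R) (a : R), Ck N.-1 f ->
     let g := fun x => a * f x + derive1 f x in
     (lower_density (zeros f) (mult_le N f)
        <= lower_density (zeros g) (mult_le N.-1 g))%E).
Proof.
split.
- move=> f a sf; set g := (fun x => a * f x + derive1 f x).
  change (lower_density (zeros f) (mult f) <= lower_density (zeros g) (mult g))%E.
  have mg0 : forall x, (0 <= mult g x)%E by move=> x; apply: MS_ge0.
  apply: density_mono => // r x r0.
  apply: core_esum => //.
  + move=> y _; apply: MS_shift => // m Am j jm.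
    have Hd : forall k (z : R), (k < j.+1)%N -> derivable (derive1n k f) z 1.
      by move=> k z _; apply: sf.
    rewrite (@derive1n_g _ _ a _ Hd) //.
    by rewrite (Am j) ?(Am j.+1) ?mulr0 ?addr0 // ltnS ltnW.
  + move=> u v fu fv uv.
    have [t tI gt] := @rolle_g R f a u v (fun x => sf 0%N x) uv fu fv.
    by exists t => //; apply: MS_ge1 => -[|//] _.
  + move=> y ngy; apply/eqP; rewrite eq_le MS_ge0 // andbT.
    by apply: MS_le0 => -[//|m] Am; exfalso; apply: ngy; exact: (Am 0%N).
- move=> N N2 f a [dfN cN]; set g := (fun x => a * f x + derive1 f x).
  change (lower_density (zeros f) (mult_le N f)
        <= lower_density (zeros g) (mult_le N.-1 g))%E.
  have N1 : (0 < N.-1)%N by rewrite -ltnS prednK // ltnW.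
  have mg0 : forall x, (0 <= mult_le N.-1 g x)%E by move=> x; apply: MS_ge0.
  apply: density_mono => // r x r0.
  apply: core_esum => //.
  + move=> y _; apply: MS_shift => // m [mN Am]; split.
      by rewrite -ltnS prednK // ltnW.
    move=> j jm.
    rewrite (@derive1n_g _ _ a _ dfN); last first.
      by apply: leq_trans jm _; rewrite -ltnS prednK // ltnW.
    by rewrite (Am j) ?(Am j.+1) ?mulr0 ?addr0 // ltnS ltnW.
  + move=> u v fu fv uv.
    have [t tI gt] := @rolle_g R f a u v (fun x => dfN 0%N x N1) uv fu fv.
    by exists t => //; apply: MS_ge1; split => // -[|//] _.
  + move=> y ngy; apply/eqP; rewrite eq_le MS_ge0 // andbT.
    by apply: MS_le0 => -[//|m] [_ Am]; exfalso; apply: ngy; exact: (Am 0%N).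
Qed.
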